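(* There does not exist a countably additive exchangeable probability measure $P$ on $(\mathbb{R}^\infty,\mathcal B(\mathbb{R})^{\otimes\infty})$ for the coordinate sequence $Y_1,Y_2,\dots$ such that, for every $n\ge1$ and every $k\in\{0,\dots,n\}$, \[ P\big(Y_{n+1}\in I_k(Y_{1:n})\,\big|\,Y_{1:n}\big)=\frac{1}{n+1}\quad P\text{-a.s.}, \] where the conditional probability is the regular conditional distribution of $Y_{n+1}$ given $Y_{1:n}$ under $P$.
   Context: For $y_{1:n}\in\mathbb{R}^n$ with order statistics $y_{(1)}\le\cdots\le y_{(n)}$ and conventions $y_{(0)}=-\infty$, $y_{(n+1)}=+\infty$, the order-statistic cells are $I_k(y_{1:n})=(y_{(k)},y_{(k+1)}]$ for $k=0,\dots,n$. A probability measure on $\mathbb{R}^\infty$ is exchangeable if the joint law of $(Y_1,\dots,Y_n)$ is invariant under every permutation of the coordinates, for every $n$. *)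

(* Defs.v *)
From HB Require Import structures.
From mathcomp Require Import all_boot all_order all_algebra all_fingroup.
From mathcomp Require Import all_classical all_reals all_analysis.
Set Implicit Arguments. Unset Strict Implicit. Unset Printing Implicit Defensive.
Import Order.TTheory GRing.Theory Num.Theory numFieldNormedType.Exports.
Local Open Scope classical_set_scope.
Local Open Scope ring_scope.

Section defs.
Variable R : realType.

(* Coordinate maps Y_{i+1} (0-based index i) on R^infinity = nat -> R. *)
Definition coord (i : nat) : (nat -> R) -> R := fun w => w i.

(* Generators of the product sigma-algebra B(R)^{\otimes infinity}:
   preimages of Borel sets under the coordinate maps. *)
Definition coord_gen : set (set (nat -> R)) :=
  \bigcup_(i in [set: nat]) preimage_set_system setT (coord i) measurable.

Definition Rinf := g_sigma_algebraType coord_gen.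

Definition sigmaY (n : nat) : set (set (nat -> R)) :=
  g_sigma_preimage (fun i : 'I_n => coord i).

Definition permute_coords (n : nat) (s : {perm 'I_n}) (w : nat -> R) : nat -> R :=
  fun i => if insub i is Some j then w (val (s j)) else w i.

(* Order statistics y_(1) <= ... <= y_(n) of y_{1:n} = (w 0, ..., w (n-1)):
   ostat n w is the sorted list, so y_(j) = (ostat n w)`_(j-1). *)
Definition ostat (n : nat) (w : nat -> R) : seq R :=
  sort (fun x y : R => x <= y) [seq w i | i <- iota 0 n].

(* The event { Y_{n+1} \in I_k(Y_{1:n}) }, with I_k = (y_(k), y_(k+1)],
   y_(0) = -oo, y_(n+1) = +oo. *)
Definition cell_event (n k : nat) : set (nat -> R) :=
  [set w | ((k == 0)%N || ((ostat n w)`_k.-1 < w n)) &&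
           ((k == n) || (w n <= (ostat n w)`_k))].

(* Exchangeability: for every n the joint law of (Y_1,...,Y_n) is invariant under
   every permutation of the coordinates, i.e. for every B = {(Y_1..Y_n) \in C}
   in sigma(Y_1..Y_n), P(B) = P((Y_{s 1},...,Y_{s n}) \in C). *)
Definition exchangeable (P : probability Rinf R) : Prop :=
  forall (n : nat) (s : {perm 'I_n}) (B : set (nat -> R)),
    sigmaY n B -> P B = P (permute_coords s @^-1` B).

(* P(A | Y_{1:n}) = c  P-a.s., by the defining property of conditional
   probability given sigma(Y_{1:n}): P(A \cap B) = \int_B c dP for all B. *)
Definition condprob_const (P : probability Rinf R) (n : nat)
    (A : set (nat -> R)) (c : R) : Prop :=
  forall B : set (nat -> R), sigmaY n B -> P (A `&` B) = (c%:E * P B)%E.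

End defs.

(* Main.v *)
Require Import Defs.
From HB Require Import structures.
From mathcomp Require Import all_boot all_order all_algebra all_fingroup.
From mathcomp Require Import all_classical all_reals all_analysis.
Import Order.TTheory GRing.Theory Num.Theory numFieldNormedType.Exports.
Local Open Scope classical_set_scope.
Local Open Scope ring_scope.
From mathcomp Require Import lra measurable_realfun.
Set Implicit Arguments.
Section S.
Variable R : realType.
Implicit Types n : nat.

Definition tup n (w : nat -> R) : n.-tuple R := [tuple w (val i) | i < n].

Lemma sY_bool n (f : n.-tuple R -> bool) : measurable_fun setT f ->
  sigmaY n [set w | f (tup n w)].
Proof.
move=> mf; rewrite /sigmaY.
have -> : (fun i : 'I_n => @Defs.coord R i) = (fun i => (fun t : n.-tuple R => tnth t i) \o tup n).
  by apply/funext => i; apply/funext => w; rewrite /= tnth_mktuple.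
rewrite g_sigma_preimage_comp.
exists (f @^-1` [set true]).
  by have := mf measurableT [set true] I; rewrite setTI.
by rewrite setTI.
Qed.

Lemma sY_meas n (B : set (nat -> R)) : sigmaY n B -> measurable (B : set (Rinf R)).
Proof.
move=> h; apply: (smallest_sub _ _ h); first exact: (@sigma_algebra_measurable _ (Rinf R)).
move=> A; rewrite -(bigcup_mkord n (fun i : nat => preimage_set_system setT (@Defs.coord R i) measurable)) => -[i /= ilt [C mC <-]].
apply: sub_sigma_algebra; exists i => //.
by exists C.
Qed.


Lemma cell10 : cell_event 1 0 = [set w : nat -> R | w 1%N <= w 0%N].
Proof. by apply/funext => w; rewrite /cell_event /ostat /=. Qed.
Lemma cell11 : cell_event 1 1 = [set w : nat -> R | w 0%N < w 1%N].
Proof. by apply/funext => w; rewrite /cell_event /ostat /= andbT. Qed.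
Definition o0 : 'I_2 := ord0.
Definition o1 : 'I_2 := ord_max.
Definition p0 : 'I_1 := ord0.
Lemma perm01 (w : nat -> R) : permute_coords (tperm o0 o1) w 0%N = w 1%N /\ permute_coords (tperm o0 o1) w 1%N = w 0%N.
Proof.
rewrite /permute_coords.
rewrite (insubT (fun i => i < 2)%N (isT : (0 < 2)%N)) (insubT (fun i => i < 2)%N (isT : (1 < 2)%N)) /=.
have -> : (@Sub _ _ (ordinal 2) 0%N isT) = o0 by apply/val_inj.
have -> : (@Sub _ _ (ordinal 2) 1%N isT) = o1 by apply/val_inj.
by rewrite tpermL tpermR.
Qed.

Lemma sY_one n (f : n.-tuple R -> bool) (A : set (nat -> R)) :
  measurable_fun setT f -> (forall w, A w <-> f (tup n w)) -> sigmaY n A.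
Proof.
move=> mf hA; have := sY_bool mf; congr (sigmaY n).
by apply/funext => w; apply/propext; split => /hA.
Qed.

Lemma mtn n (i : 'I_n) : measurable_fun setT (fun t : n.-tuple R => tnth t i).
Proof. exact: measurable_tnth. Qed.

Lemma tup0 n (w : nat -> R) (i : 'I_n) : tnth (tup n w) i = w i.
Proof. by rewrite tnth_mktuple. Qed.

End S.

Theorem mainTheorem3 (R : realType) :
  ~ exists P : probability (Rinf R) R,
      exchangeable P /\
      forall n k : nat, (1 <= n)%N -> (k <= n)%N ->
        condprob_const P n (cell_event n k) (n.+1%:R)^-1.
Proof.
move=> [P [exch H]].
pose c : R := (2%:R)^-1.
have c0 : 0 < c by rewrite /c invr_gt0 ltr0n.
pose pr (A : set (nat -> R)) := fine (P A).
have prE A : @measurable _ (Rinf R) A -> P A = (pr A)%:E.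
  by move=> mA; rewrite /pr fineK //; exact: fin_num_measure.
pose Le := [set w : nat -> R | w 1%N <= w 0%N].
pose Lt := [set w : nat -> R | w 0%N < w 1%N].
pose Gt := [set w : nat -> R | w 1%N < w 0%N].
pose Sa a := [set w : nat -> R | w 0%N <= a].
pose Ge a := [set w : nat -> R | w 0%N <= w 1%N /\ w 1%N <= a].
have sLe : sigmaY 2 Le.
  refine (sY_one _ (measurable_fun_ler (@mtn R _ o1) (@mtn R _ o0)) _) => w.
  by rewrite !tup0.
have sLt : sigmaY 2 Lt.
  refine (sY_one _ (measurable_fun_ltr (@mtn R _ o0) (@mtn R _ o1)) _) => w.
  by rewrite !tup0.
have sGt : sigmaY 2 Gt.
  refine (sY_one _ (measurable_fun_ltr (@mtn R _ o1) (@mtn R _ o0)) _) => w.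
  by rewrite !tup0.
have sSa1 a : sigmaY 1 (Sa a).
  refine (sY_one _ (measurable_fun_ler (@mtn R _ p0) (measurable_cst a)) _) => w.
  by rewrite !tup0.
have sSa2 a : sigmaY 2 (Sa a).
  refine (sY_one _ (measurable_fun_ler (@mtn R _ o0) (measurable_cst a)) _) => w.
  by rewrite !tup0.
have sGe a : sigmaY 2 (Ge a).
  refine (sY_one _ (measurable_and (measurable_fun_ler (@mtn R _ o0) (@mtn R _ o1))
     (measurable_fun_ler (@mtn R _ o1) (measurable_cst a))) _) => w.
  rewrite !tup0 /=; split; [by move=> [-> ->]|by move/andP].
have sLeSa a : sigmaY 2 (Le `&` Sa a).
  refine (sY_one _ (measurable_and (measurable_fun_ler (@mtn R _ o1) (@mtn R _ o0))
     (measurable_fun_ler (@mtn R _ o0) (measurable_cst a))) _) => w.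
  rewrite !tup0 /=; split; [by move=> [-> ->]|by move/andP].
have sT1 : @sigmaY R 1 setT.
  refine (sY_one (f := fun _ => true) _ (measurable_cst true) _) => w. by [].
have mS n A : @sigmaY R n A -> @measurable _ (Rinf R) A.
  exact: sY_meas.
have hLe B : sigmaY 1 B -> pr (Le `&` B) = c * pr B.
  move=> sB; have := H 1%N 0%N isT isT B sB; rewrite cell10.
  rewrite (prE _ (measurableI _ _ (mS _ _ sLe) (mS _ _ sB))) (prE _ (mS _ _ sB)) -EFinM.
  by move=> [->].
have hLt B : sigmaY 1 B -> pr (Lt `&` B) = c * pr B.
  move=> sB; have := H 1%N 1%N isT isT B sB; rewrite cell11.
  rewrite (prE _ (measurableI _ _ (mS _ _ sLt) (mS _ _ sB))) (prE _ (mS _ _ sB)) -EFinM.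
  by move=> [->].
have DI A B : @measurable _ (Rinf R) A -> @measurable _ (Rinf R) B ->
    pr A = pr (A `\` B) + pr (A `&` B).
  move=> mA mB; apply: EFin_inj.
  rewrite EFinD -(prE _ mA) -(prE _ (measurableD mA mB)) -(prE _ (measurableI _ _ mA mB)).
  exact: measureDI.
have LE A B : @measurable _ (Rinf R) A -> @measurable _ (Rinf R) B ->
    A `<=` B -> pr A <= pr B.
  move=> mA mB AB; rewrite -lee_fin -(prE _ mA) -(prE _ mB).
  exact: le_measure (mem_set mA) (mem_set mB) AB.
have GE0 A : 0 <= pr A by apply: fine_ge0; exact: measure_ge0.
have pT : pr setT = 1 by rewrite /pr probability_setT.
pose s := tperm o0 o1.
have swapE A B : sigmaY 2 A -> (forall w, A (permute_coords s w) <-> B w) -> pr A = pr B.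
  move=> sA hAB; rewrite /pr (exch 2%N s A sA); congr (fine (P _)).
  by apply/funext => w; apply/propext; exact: hAB.
have mLe := mS _ _ sLe; have mLt := mS _ _ sLt; have mGt := mS _ _ sGt.
have mSa a := mS _ _ (sSa2 a); have mGe a := mS _ _ (sGe a).
have h1 : pr Le = c by have := hLe setT sT1; rewrite setIT pT mulr1.
have h2 : pr Lt = c by have := hLt setT sT1; rewrite setIT pT mulr1.
have h3 : pr Gt = pr Lt.
  by symmetry; apply: (swapE _ _ sLt) => w; rewrite /Lt /Gt /s /=; have [-> ->] := @perm01 R w.
have tie : pr (Le `\` Gt) = 0.
  have := DI Le Gt mLe mGt.
  have -> : Le `&` Gt = Gt.
    by apply/seteqP; split => w /=; [case | move=> h; split => //; exact: ltW].
  lra.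
have X0 a : P ((Lt `&` Sa a) `\` Ge a) = 0.
  have h4 := hLt (Sa a) (sSa1 a).
  have h5 := hLe (Sa a) (sSa1 a).
  have h6 : pr (Le `&` Sa a) = pr (Ge a).
    apply: (swapE _ _ (sLeSa a)) => w; rewrite /Le /Sa /Ge /s /=; have [-> ->] := @perm01 R w.
    by rewrite /=; split => -[x y]; split.
  have d1 := DI (Lt `&` Sa a) (Ge a) (measurableI _ _ mLt (mSa a)) (mGe a).
  have d2 := DI (Ge a) Lt (mGe a) mLt.
  have e : (Lt `&` Sa a) `&` Ge a = Ge a `&` Lt.
    apply/seteqP; split => w /=; first by move=> [[x y] [z t]].
    by rewrite /Sa /Lt /Ge /=; move=> [[x y] z]; split => //; split => //; lra.
  have l : pr (Ge a `\` Lt) <= pr (Le `\` Gt).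
    apply: LE; [exact: measurableD | exact: measurableD |].
    rewrite /Sa /Lt /Ge /Le /Gt; move=> w /= [[x y] z]; split; first by rewrite leNgt; exact/negP.
    by move=> t; lra.
  rewrite e in d1.
  have := GE0 ((Lt `&` Sa a) `\` Ge a).
  rewrite (prE _ (measurableD (measurableI _ _ mLt (mSa a)) (mGe a))) => g.
  apply/eqP; rewrite eqe; apply/eqP; lra.
pose f m : R := if @unpickle rat m is Some q then ratr q else 0.
have hN : negligible P (\bigcup_m ((Lt `&` Sa (f m)) `\` Ge (f m))).
  apply: negligible_bigcup => m.
  exists ((Lt `&` Sa (f m)) `\` Ge (f m)); split => //.
  exact: measurableD (measurableI _ _ mLt (mSa _)) (mGe _).
  exact: X0.
case: hN => N0 [mN PN sub].
have : (P Lt <= P N0)%E.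
  apply: le_measure; [exact: mem_set | exact: mem_set |].
  move=> w Lw; apply: sub; rewrite /Lt /= in Lw.
  have [q] := rat_in_itvoo Lw; rewrite in_itv /= => /andP[q1 q2].
  exists (pickle q) => //; rewrite /f pickleK /Sa /Lt /Ge /=.
  split; [split => //; exact: ltW | move=> [_ h]; lra].
by rewrite PN (prE _ mLt) h2 lee_fin; lra.
Qed.
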